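(* Let $q>1$, $0\le M_0<M$, let $u$ be a sufficiently smooth $L$-periodic solution of $u_t=-\alpha uu_x+\beta u_{xxx}$ on $[0,T]\times\mathbb{R}$, $r>\sup_{t,x}|u(t,x)|$. Assume $u^{(0)}_k=u(0,k\Delta x)$, that $u^{(0)},\dots,u^{(M_0+1)}$ are obtained successively as solutions of the scheme, that $\|u^{(m)}\|_\infty\le r$ for $m\le M_0$, that $\Delta t<\min\{\varepsilon_1(q,r,\Delta x),\varepsilon_2(q,r,\Delta x)\}$, and that $\|u^{(M_0+1)}\|_\infty\le qr$. Let $c_0>0$ be a constant independent of $\Delta t,\Delta x$ with $\|\tau^{(m)}\|,\|\delta^+_x\tau^{(m)}\|\le c_0((\Delta t)^2+(\Delta x)^2)$ for $m=0,\dots,M_0$. Then for $m=0,\dots,M_0$, $$\delta^+_t\|e^{(m)}\|^2\le C_1\,\mu^+_t\|e^{(m)}\|_{H^1}^2 + c_0^2\big((\Delta t)^2+(\Delta x)^2\big)^2,$$ where $C_1=C_1(q,r)=\max\{3|\alpha|(2q^2+1)r^2+1,\ |\alpha|/2\}$.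
   Context: $L>0$, $K\in\mathbb{N}$, $\Delta x=L/K$; $T>0$, $M\in\mathbb{N}$, $\Delta t=T/M$; $\alpha\in\mathbb{R}$, $\beta\ne0$. Grid functions are $K$-periodic real sequences. $\delta^+_x v_k=(v_{k+1}-v_k)/\Delta x$, $\delta^{\langle 1\rangle}_x v_k = (v_{k+1}-v_{k-1})/(2\Delta x)$, $\delta^{\langle 2\rangle}_x v_k = (v_{k+1}-2v_k+v_{k-1})/(\Delta x)^2$, $\|v\|=(\sum_{k=1}^K v_k^2\Delta x)^{1/2}$, $\|v\|_\infty=\max_k|v_k|$, $\|v\|_{H^1}=(\|v\|^2+\|\delta^+_xv\|^2)^{1/2}$; $\delta^+_t v^{(n)}=(v^{(n+1)}-v^{(n)})/\Delta t$, $\mu^+_t v^{(n)}=(v^{(n+1)}+v^{(n)})/2$ (so e.g. $\mu^+_t\|e^{(m)}\|^2=(\|e^{(m+1)}\|^2+\|e^{(m)}\|^2)/2$). The scheme: $u^{(n+1)}$ solves it at step $n$ if $\delta^+_t u^{(n)}_k = -\frac{\alpha}{6}\delta^{\langle 1\rangle}_x\{(u^{(n+1)}_k)^2 + u^{(n+1)}_k u^{(n)}_k + (u^{(n)}_k)^2\} + \beta\delta^{\langle 1\rangle}_x\delta^{\langle 2\rangle}_x \mu^+_t u^{(n)}_k$ for all $k$. $\varepsilon_1(q,r,\Delta x) = (q-1)(\Delta x)^3[\frac{|\alpha|}{6}(\Delta x)^2(q^2+q+1)r + \frac{3}{2}|\beta|(q+1)]^{-1}$, $\varepsilon_2(q,r,\Delta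 x) = (\Delta x)^3[\frac{|\alpha|}{6}(\Delta x)^2(2q+1)r + \frac{3}{2}|\beta|]^{-1}$. $\tilde u^{(m)}_k=u(m\Delta t,k\Delta x)$, $e^{(m)}=u^{(m)}-\tilde u^{(m)}$, and the local truncation error $\tau^{(m)}$ is defined by $\delta^+_t \tilde u^{(m)}_k = -\frac{\alpha}{6}\delta^{\langle 1\rangle}_x\{(\tilde u^{(m+1)}_k)^2 + \tilde u^{(m+1)}_k \tilde u^{(m)}_k + (\tilde u^{(m)}_k)^2\} + \beta\delta^{\langle 1\rangle}_x\delta^{\langle 2\rangle}_x \mu^+_t \tilde u^{(m)}_k+\tau^{(m)}_k$. *)

(* Defs.v *)
From Stdlib Require Import Reals Lra ZArith.
Open Scope R_scope.

Definition grid := Z -> R.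

Definition periodic (K : nat) (v : grid) : Prop :=
  forall k : Z, v (k + Z.of_nat K)%Z = v k.

(* gsum f n = f 1 + ... + f n *)
Fixpoint gsum (f : Z -> R) (n : nat) : R :=
  match n with
  | O => 0
  | S n' => gsum f n' + f (Z.of_nat (S n'))
  end.

Fixpoint gmax (f : Z -> R) (n : nat) : R :=
  match n with
  | O => 0
  | S n' => Rmax (gmax f n') (Rabs (f (Z.of_nat (S n'))))
  end.

Definition dxp (dx : R) (v : grid) : grid := fun k => (v (k + 1)%Z - v k) / dx.
Definition d1 (dx : R) (v : grid) : grid := fun k => (v (k + 1)%Z - v (k - 1)%Z) / (2 * dx).
Definition d2 (dx : R) (v : grid) : grid :=
  fun k => (v (k + 1)%Z - 2 * v k + v (k - 1)%Z) / (dx ^ 2).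

Definition normsq (K : nat) (dx : R) (v : grid) : R := gsum (fun k => v k ^ 2 * dx) K.
Definition supnorm (K : nat) (v : grid) : R := gmax v K.
Definition H1sq (K : nat) (dx : R) (v : grid) : R := normsq K dx v + normsq K dx (dxp dx v).

Definition scheme_rhs (alpha beta dx : R) (unew uold : grid) : grid :=
  fun k =>
    - alpha / 6 * d1 dx (fun j => unew j ^ 2 + unew j * uold j + uold j ^ 2) k
    + beta * d1 dx (d2 dx (fun j => (unew j + uold j) / 2)) k.

Definition solves_step (alpha beta dx dt : R) (uold unew : grid) : Prop :=
  forall k : Z, (unew k - uold k) / dt = scheme_rhs alpha beta dx unew uold k.

Definition epsilon1 (alpha beta q r dx : R) : R :=
  (q - 1) * dx ^ 3 /
  (Rabs alpha / 6 * dx ^ 2 * (q ^ 2 + q + 1) * r + 3 / 2 * Rabs beta * (q + 1)).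

Definition epsilon2 (alpha beta q r dx : R) : R :=
  dx ^ 3 / (Rabs alpha / 6 * dx ^ 2 * (2 * q + 1) * r + 3 / 2 * Rabs beta).

Definition usample (u : R -> R -> R) (dt dx : R) (m : nat) : grid :=
  fun k => u (INR m * dt) (IZR k * dx).

Definition tau (alpha beta dx dt : R) (u : R -> R -> R) (m : nat) : grid :=
  fun k =>
    (usample u dt dx (S m) k - usample u dt dx m k) / dt
    - scheme_rhs alpha beta dx (usample u dt dx (S m)) (usample u dt dx m) k.

Definition kdv_solution (alpha beta L T : R) (u : R -> R -> R) : Prop :=
  (forall t x, u t (x + L) = u t x) /\
  exists ut ux uxx uxxx : R -> R -> R,
    (forall t x, 0 <= t <= T ->
       derivable_pt_lim (fun y => u t y) x (ux t x) /\
       derivable_pt_lim (fun y => ux t y) x (uxx t x) /\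
       derivable_pt_lim (fun y => uxx t y) x (uxxx t x)) /\
    (forall t x, 0 < t < T -> derivable_pt_lim (fun s => u s x) t (ut t x)) /\
    (forall t x, 0 <= t <= T -> continuity_pt (fun s => u s x) t) /\
    (forall t x, 0 < t < T ->
       ut t x = - alpha * u t x * ux t x + beta * uxxx t x).

(* Main.v *)
Require Import Defs.
From Stdlib Require Import Reals Lra Lia Psatz ZArith.
Require Import Defs.
Open Scope R_scope.

Lemma gsum_ext f g n : (forall k, f k = g k) -> gsum f n = gsum g n.
Proof. intros H; induction n; cbn [gsum]; [lra|]. rewrite IHn, H; lra. Qed.
Lemma gsum_add f g n : gsum (fun k => f k + g k) n = gsum f n + gsum g n.
Proof. induction n; cbn [gsum]; [lra|]. rewrite IHn; lra. Qed.
Lemma gsum_scal c f n : gsum (fun k => c * f k) n = c * gsum f n.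
Proof. induction n; cbn [gsum]; [lra|]. rewrite IHn; lra. Qed.
Lemma gsum_le f g n : (forall k, (1 <= k <= Z.of_nat n)%Z -> f k <= g k) -> gsum f n <= gsum g n.
Proof. induction n; intros H; cbn [gsum]; [lra|].
  assert (gsum f n <= gsum g n) by (apply IHn; intros; apply H; lia).
  assert (f (Z.of_nat (S n)) <= g (Z.of_nat (S n))) by (apply H; lia). lra. Qed.
Lemma gsum_SR F n : gsum (fun k => F (k+1)%Z) n = gsum F n + F (Z.of_nat n + 1)%Z - F 1%Z.
Proof. induction n; cbn [gsum]; [simpl; lra|]. rewrite IHn.
  replace (Z.of_nat n + 1)%Z with (Z.of_nat (S n)) by lia. lra. Qed.
Lemma gsum_SL F n : gsum (fun k => F (k-1)%Z) n = gsum F n + F 0%Z - F (Z.of_nat n).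
Proof. induction n; cbn [gsum]; [simpl; lra|]. rewrite IHn.
  replace (Z.of_nat (S n) - 1)%Z with (Z.of_nat n) by lia. lra. Qed.
Lemma shR K F : periodic K F -> gsum (fun k => F (k+1)%Z) K = gsum F K.
Proof. intros H. rewrite gsum_SR. rewrite Z.add_comm, H. lra. Qed.
Lemma shL K F : periodic K F -> gsum (fun k => F (k-1)%Z) K = gsum F K.
Proof. intros H. rewrite gsum_SL. rewrite <- (H 0%Z). simpl. lra. Qed.
Lemma per_sh K v z : periodic K v -> periodic K (fun k => v (k + z)%Z).
Proof. intros H k. replace (k + Z.of_nat K + z)%Z with (k + z + Z.of_nat K)%Z by lia. apply H. Qed.
Lemma per_mul K f g : periodic K f -> periodic K g -> periodic K (fun k => f k * g k).
Proof. intros Hf Hg k. rewrite Hf, Hg. reflexivity. Qed.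

Lemma sbp K dx g h : dx <> 0 -> periodic K g -> periodic K h ->
  gsum (fun k => g k * d1 dx h k) K = - gsum (fun k => h k * d1 dx g k) K.
Proof.
  intros Hdx Hg Hh. unfold d1.
  assert (E1 : gsum (fun k => g k * h (k+1)%Z) K = gsum (fun k => g (k-1)%Z * h k) K).
  { rewrite <- (shR K (fun k => g (k-1)%Z * h k)).
    - apply gsum_ext; intros k. now replace (k+1-1)%Z with k by lia.
    - apply per_mul; [apply per_sh|]; assumption. }
  assert (E2 : gsum (fun k => g k * h (k-1)%Z) K = gsum (fun k => g (k+1)%Z * h k) K).
  { rewrite <- (shL K (fun k => g (k+1)%Z * h k)).
    - apply gsum_ext; intros k. now replace (k-1+1)%Z with k by lia.
    - apply per_mul; [apply per_sh|]; assumption. }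
  transitivity (/(2*dx) * (gsum (fun k => g k * h (k+1)%Z) K + (-1) * gsum (fun k => g k * h (k-1)%Z) K)).
  { rewrite <- gsum_scal, <- gsum_add, <- gsum_scal. apply gsum_ext; intros k. field. auto. }
  transitivity (- (/(2*dx) * (gsum (fun k => h k * g (k+1)%Z) K + (-1) * gsum (fun k => h k * g (k-1)%Z) K))).
  { rewrite E1, E2. 
    rewrite (gsum_ext (fun k => h k * g (k+1)%Z) (fun k => g (k+1)%Z * h k)) by (intros; ring).
    rewrite (gsum_ext (fun k => h k * g (k-1)%Z) (fun k => g (k-1)%Z * h k)) by (intros; ring).
    ring. }
  f_equal. rewrite <- gsum_scal, <- gsum_add, <- gsum_scal. apply gsum_ext; intros k. field. auto.
Qed.

Lemma skew0 K dx w : dx <> 0 -> periodic K w ->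
  gsum (fun k => d2 dx w k * d1 dx w k) K = 0.
Proof.
  intros Hdx Hw. unfold d1, d2.
  assert (E1 : gsum (fun k => w (k+1)%Z ^ 2) K = gsum (fun k => w k ^ 2) K)
    by (apply (shR K (fun k => w k ^ 2)); intros k; now rewrite Hw).
  assert (E2 : gsum (fun k => w (k-1)%Z ^ 2) K = gsum (fun k => w k ^ 2) K)
    by (apply (shL K (fun k => w k ^ 2)); intros k; now rewrite Hw).
  assert (E3 : gsum (fun k => w k * w (k+1)%Z) K = gsum (fun k => w (k-1)%Z * w k) K).
  { rewrite <- (shR K (fun k => w (k-1)%Z * w k)).
    - apply gsum_ext; intros k. now replace (k+1-1)%Z with k by lia.
    - apply per_mul; [apply per_sh|]; assumption. }
  transitivity (/(2*dx^3) * (gsum (fun k => w (k+1)%Z ^ 2) K + (-1) * gsum (fun k => w (k-1)%Z ^ 2) K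
     + (-2) * gsum (fun k => w k * w (k+1)%Z) K + 2 * gsum (fun k => w (k-1)%Z * w k) K)).
  { rewrite <- !gsum_scal, <- !gsum_add, <- gsum_scal. apply gsum_ext; intros k. field. auto. }
  rewrite E1, E2, E3. ring.
Qed.
Lemma abs_btw x y : Rabs x <= y -> - y <= x <= y.
Proof. unfold Rabs; destruct (Rcase_abs x); lra. Qed.
Lemma sq4 p1 p0 p1' p0' : ((p1+p0+p1'+p0')/4)^2 <= (p1^2+p0^2+p1'^2+p0'^2)/4.
Proof.
 assert (0 <= (p1-p0)^2 + (p1-p1')^2 + (p1-p0')^2 + (p0-p1')^2 + (p0-p0')^2 + (p1'-p0')^2).
 { repeat apply Rplus_le_le_0_compat; apply pow2_ge_0. }
 lra.
Qed.
Lemma sqb A Q : - Q <= A <= Q -> A^2 <= Q^2.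
Proof. intros H. assert (0 <= (Q - A) * (Q + A)) by (apply Rmult_le_pos; lra). lra. Qed.
Lemma amgm_abs alpha N X : alpha * N * X <= Rabs alpha * (N^2 + X^2) / 2.
Proof.
  assert (0 <= (N - X)^2) by apply pow2_ge_0. assert (0 <= (N + X)^2) by apply pow2_ge_0.
  destruct (Rle_dec 0 alpha).
  - rewrite Rabs_right by lra. assert (0 <= alpha * (N-X)^2) by (apply Rmult_le_pos; lra). lra.
  - rewrite Rabs_left by lra. assert (0 <= -alpha * (N+X)^2) by (apply Rmult_le_pos; lra). lra.
Qed.
Lemma key (alpha q r a b c d t p1 p0 p1' p0' C1 : R) :
  1 < q -> 0 <= r -> Rabs a <= q * r -> Rabs b <= r -> Rabs c <= r -> Rabs d <= r ->
  3 * Rabs alpha * (2 * q ^ 2 + 1) * r ^ 2 + 1 <= C1 -> Rabs alpha / 2 <= C1 ->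
  alpha / 3 * (a^2 + a*b + b^2 - (c^2 + c*d + d^2)) * ((p1+p0+p1'+p0')/4)
   - 2 * t * (((a-c)+(b-d))/2)
  <= t^2 + C1/2 * ((a-c)^2 + (b-d)^2) + C1/4 * (p1^2+p0^2+p1'^2+p0'^2).
Proof.
  intros Hq Hr Ha Hb Hc Hd HC1 HC2.
  apply abs_btw in Ha. apply abs_btw in Hb. apply abs_btw in Hc. apply abs_btw in Hd.
  assert (HA : (a+b+c)^2 <= ((q+2)*r)^2) by (apply sqb; nra).
  assert (HB : (b+c+d)^2 <= (3*r)^2) by (apply sqb; lra).
  remember (a+b+c) as A. remember (b+c+d) as B.
  remember (a-c) as e1. remember (b-d) as e0.
  assert (HN : a^2 + a*b + b^2 - (c^2 + c*d + d^2) = e1 * A + e0 * B) by (subst; ring).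
  rewrite HN.
  remember (e1 * A + e0 * B) as N. remember ((p1+p0+p1'+p0')/4) as X.
  assert (HN2 : N^2 <= 2 * e1^2 * ((q+2)*r)^2 + 2 * e0^2 * (3*r)^2).
  { subst N. assert (0 <= (e1*A - e0*B)^2) by apply pow2_ge_0.
    assert (e1^2 * A^2 <= e1^2 * ((q+2)*r)^2) by (apply Rmult_le_compat_l; [apply pow2_ge_0|lra]).
    assert (e0^2 * B^2 <= e0^2 * (3*r)^2) by (apply Rmult_le_compat_l; [apply pow2_ge_0|lra]).
    lra. }
  assert (HX : X^2 <= (p1^2+p0^2+p1'^2+p0'^2)/4) by (subst X; apply sq4).
  assert (HNX : alpha / 3 * N * X <= Rabs alpha / 6 * (N^2 + X^2)).
  { pose proof (amgm_abs alpha N X). lra. }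
  assert (Htw : - 2 * t * ((e1 + e0)/2) <= t^2 + (e1^2 + e0^2)/2).
  { assert (0 <= (t + (e1+e0)/2)^2) by apply pow2_ge_0. assert (0 <= (e1 - e0)^2) by apply pow2_ge_0. lra. }
  assert (Hal : 0 <= Rabs alpha) by apply Rabs_pos.
  assert (Hq2 : (q+2)^2 <= 9 * (2*q^2+1) / 2).
  { assert (0 <= (4*q-1)^2) by apply pow2_ge_0. lra. }
  assert (He1 : 0 <= e1^2) by apply pow2_ge_0. assert (He0 : 0 <= e0^2) by apply pow2_ge_0.
  assert (Hr2 : 0 <= r^2) by apply pow2_ge_0.
  assert (H1 : Rabs alpha / 6 * N^2 <= (C1 - 1)/2 * (e1^2 + e0^2)).
  { assert (Rabs alpha / 6 * N^2 <= Rabs alpha / 6 * (2 * e1^2 * ((q+2)*r)^2 + 2 * e0^2 * (3*r)^2))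
      by (apply Rmult_le_compat_l; lra).
    assert (Rabs alpha * (q+2)^2 * r^2 <= Rabs alpha * (9 * (2*q^2+1) / 2) * r^2).
    { apply Rmult_le_compat_r; [lra|]. apply Rmult_le_compat_l; lra. }
    assert (Rabs alpha * r^2 * 2 <= Rabs alpha * r^2 * (2*q^2+1)).
    { apply Rmult_le_compat_l; [apply Rmult_le_pos; lra|]. nra. }
    assert (e1^2 * (Rabs alpha * (q+2)^2 * r^2) <= e1^2 * ((C1-1)/2 * 3)) by (apply Rmult_le_compat_l; lra).
    assert (e0^2 * (Rabs alpha * r^2 * 2) <= e0^2 * ((C1-1)/2 * 2/3)) by (apply Rmult_le_compat_l; lra).
    lra. }
  assert (H2 : Rabs alpha / 6 * X^2 <= C1/4 * (p1^2+p0^2+p1'^2+p0'^2)).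
  { assert (0 <= p1^2+p0^2+p1'^2+p0'^2).
    { repeat apply Rplus_le_le_0_compat; apply pow2_ge_0. }
    assert (Rabs alpha / 6 * X^2 <= Rabs alpha / 6 * ((p1^2+p0^2+p1'^2+p0'^2)/4)) by (apply Rmult_le_compat_l; lra).
    assert (Rabs alpha / 6 * ((p1^2+p0^2+p1'^2+p0'^2)/4) <= C1/4 * (p1^2+p0^2+p1'^2+p0'^2)).
    { assert (Rabs alpha/6 * /4 <= C1/4) by lra.
      assert ((Rabs alpha/6 * /4) * (p1^2+p0^2+p1'^2+p0'^2) <= C1/4 * (p1^2+p0^2+p1'^2+p0'^2)) by (apply Rmult_le_compat_r; lra).
      lra. }
    lra. }
  lra.
Qed.
Lemma gmax_ge f n k : (1 <= k <= Z.of_nat n)%Z -> Rabs (f k) <= gmax f n.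
Proof.
  induction n; intros H; cbn [gmax]; [lia|].
  destruct (Z.eq_dec k (Z.of_nat (S n))) as [->|Hne].
  - apply Rmax_r.
  - eapply Rle_trans; [apply IHn; lia| apply Rmax_l].
Qed.

Lemma sqrt_sq_le x y : 0 <= x -> sqrt x <= y -> x <= y ^ 2.
Proof.
  intros Hx H. rewrite <- (sqrt_sqrt x Hx). assert (0 <= sqrt x) by apply sqrt_pos.
  simpl. rewrite Rmult_1_r. apply Rmult_le_compat; lra.
Qed.

Lemma gsum_nonneg f n : (forall k, 0 <= f k) -> 0 <= gsum f n.
Proof. intros H; induction n; cbn [gsum]; [lra|]. specialize (H (Z.of_nat (S n))). lra. Qed.

Theorem lemma3p4
  (L T alpha beta : R) (K M : nat) (dx dt : R)
  (HL : 0 < L) (HT : 0 < T) (HK : (1 <= K)%nat) (HM : (1 <= M)%nat)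
  (Hdx : dx = L / INR K) (Hdt : dt = T / INR M) (Hbeta : beta <> 0)
  (q r c0 : R) (M0 : nat) (u : R -> R -> R) (U : nat -> grid)
  (Hq : 1 < q) (HM0 : (M0 < M)%nat)
  (Hsol : kdv_solution alpha beta L T u)
  (Hr : exists s, (forall t x, 0 <= t <= T -> Rabs (u t x) <= s) /\ s < r)
  (Hper : forall m, (m <= S M0)%nat -> periodic K (U m))
  (Hinit : forall k, U O k = u 0 (IZR k * dx))
  (Hscheme : forall n, (n <= M0)%nat -> solves_step alpha beta dx dt (U n) (U (S n)))
  (Hbound : forall m, (m <= M0)%nat -> supnorm K (U m) <= r)
  (Hdtsmall : dt < Rmin (epsilon1 alpha beta q r dx) (epsilon2 alpha beta q r dx))
  (Hlast : supnorm K (U (S M0)) <= q * r)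
  (Hc0 : 0 < c0)
  (Htau : forall m, (m <= M0)%nat ->
     sqrt (normsq K dx (tau alpha beta dx dt u m)) <= c0 * (dt ^ 2 + dx ^ 2) /\
     sqrt (normsq K dx (dxp dx (tau alpha beta dx dt u m))) <= c0 * (dt ^ 2 + dx ^ 2)) :
  let e := fun m : nat => fun k : Z => U m k - usample u dt dx m k in
  let C1 := Rmax (3 * Rabs alpha * (2 * q ^ 2 + 1) * r ^ 2 + 1) (Rabs alpha / 2) in
  forall m, (m <= M0)%nat ->
    (normsq K dx (e (S m)) - normsq K dx (e m)) / dt
    <= C1 * ((H1sq K dx (e (S m)) + H1sq K dx (e m)) / 2)
       + c0 ^ 2 * (dt ^ 2 + dx ^ 2) ^ 2.
Proof.
  intros e C1 m Hm.
  assert (HKpos : 0 < INR K) by (apply lt_0_INR; lia).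
  assert (HMpos : 0 < INR M) by (apply lt_0_INR; lia).
  assert (Hdtp : 0 < dt) by (rewrite Hdt; apply Rdiv_lt_0_compat; lra).
  assert (Hdxp : 0 < dx) by (rewrite Hdx; apply Rdiv_lt_0_compat; lra).
  assert (Hdx0 : dx <> 0) by lra.
  destruct Hr as [s [Hs Hsr]].
  assert (Hr0 : 0 <= r) by (pose proof (Hs 0 0 ltac:(lra)); pose proof (Rabs_pos (u 0 0)); lra).
  destruct Hsol as [Hupl _].
  assert (HV : forall n, periodic K (usample u dt dx n)).
  { intros n k. unfold usample. rewrite plus_IZR, <- INR_IZR_INZ.
    replace ((IZR k + INR K) * dx) with (IZR k * dx + L) by (rewrite Hdx; field; lra).
    apply Hupl. }
  assert (HVb : forall n k, (n <= S M0)%nat -> Rabs (usample u dt dx n k) <= r).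
  { intros n k Hn. unfold usample. apply Rle_trans with s; [|lra]. apply Hs. split.
    - apply Rmult_le_pos; [apply pos_INR|lra].
    - assert (INR n <= INR M) by (apply le_INR; lia).
      replace T with (INR M * dt) by (rewrite Hdt; field; lra).
      apply Rmult_le_compat_r; lra. }
  assert (He : forall n, (n <= S M0)%nat -> periodic K (e n)).
  { intros n Hn k. unfold e. rewrite (Hper n Hn), HV. reflexivity. }
  assert (He1 := He (S m) ltac:(lia)). assert (He0 := He m ltac:(lia)).
  assert (HU1 : forall k, (1 <= k <= Z.of_nat K)%Z -> Rabs (U (S m) k) <= q * r).
  { intros k Hk. destruct (Nat.eq_dec m M0) as [->|Hne].
    - eapply Rle_trans; [apply gmax_ge; exact Hk|]. apply Hlast.
    - eapply Rle_trans; [apply gmax_ge; exact Hk|]. eapply Rle_trans; [apply Hbound; lia|]. nra. }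
  assert (HU0 : forall k, (1 <= k <= Z.of_nat K)%Z -> Rabs (U m k) <= r).
  { intros k Hk. eapply Rle_trans; [apply gmax_ge; exact Hk|]. apply Hbound; lia. }
  set (N := fun j => U (S m) j ^ 2 + U (S m) j * U m j + U m j ^ 2
            - (usample u dt dx (S m) j ^ 2 + usample u dt dx (S m) j * usample u dt dx m j
               + usample u dt dx m j ^ 2)).
  set (W := fun j => (e (S m) j + e m j) / 2).
  set (ta := tau alpha beta dx dt u m).
  assert (Hid : forall k, (e (S m) k - e m k) / dt
     = - alpha / 6 * d1 dx N k + beta * d1 dx (d2 dx W) k - ta k).
  { intros k. pose proof (Hscheme m Hm k) as H.
    replace ((e (S m) k - e m k) / dt) with
      ((U (S m) k - U m k) / dt - (usample u dt dx (S m) k - usample u dt dx m k) / dt)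
      by (unfold e; field; lra).
    rewrite H. unfold ta, tau, scheme_rhs, N, W, e, d1, d2. field. lra. }
  assert (HW : periodic K W) by (intros k; unfold W; rewrite He1, He0; reflexivity).
  assert (HN : periodic K N) by (intros k; unfold N; rewrite (Hper (S m) ltac:(lia)), (Hper m ltac:(lia)), !HV; reflexivity).
  assert (Hd2W : periodic K (d2 dx W)).
  { intros k; unfold d2. replace (k + Z.of_nat K + 1)%Z with (k + 1 + Z.of_nat K)%Z by lia.
    replace (k + Z.of_nat K - 1)%Z with (k - 1 + Z.of_nat K)%Z by lia. rewrite !HW. reflexivity. }
  assert (HA : (normsq K dx (e (S m)) - normsq K dx (e m)) / dt
     = gsum (fun k => (alpha / 3 * N k * d1 dx W k - 2 * ta k * W k) * dx) K).
  { transitivity (gsum (fun k => (- alpha * dx / 3) * (W k * d1 dx N k)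
        + ((2 * beta * dx) * (W k * d1 dx (d2 dx W) k) + (- 2 * dx) * (W k * ta k))) K).
    - unfold normsq.
      transitivity (gsum (fun k => (2 * dx) * (W k * ((e (S m) k - e m k) / dt))) K).
      + rewrite gsum_scal.
        transitivity (/dt * (gsum (fun k => e (S m) k ^ 2 * dx) K + (-1) * gsum (fun k => e m k ^ 2 * dx) K)).
        { field. lra. }
        rewrite <- gsum_scal, <- gsum_add, <- gsum_scal, <- gsum_scal. apply gsum_ext; intros k.
        unfold W. field. lra.
      + apply gsum_ext; intros k. rewrite Hid. field.
    - rewrite !gsum_add, !gsum_scal. rewrite (sbp K dx W N Hdx0 HW HN).
      rewrite (sbp K dx W (d2 dx W) Hdx0 HW Hd2W). rewrite skew0 by assumption.
      transitivity ((alpha * dx / 3) * gsum (fun k => N k * d1 dx W k) K + (-2 * dx) * gsum (fun k => W k * ta k) K); [field|].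
      rewrite <- !gsum_scal, <- gsum_add. apply gsum_ext; intros k. field. }
  rewrite HA.
  set (P1 := dxp dx (e (S m))). set (P0 := dxp dx (e m)).
  assert (HB : gsum (fun k => (alpha / 3 * N k * d1 dx W k - 2 * ta k * W k) * dx) K
     <= gsum (fun k => (ta k ^ 2 + C1 / 2 * (e (S m) k ^ 2 + e m k ^ 2)
          + C1 / 4 * (P1 k ^ 2 + P0 k ^ 2 + P1 (k-1)%Z ^ 2 + P0 (k-1)%Z ^ 2)) * dx) K).
  { apply gsum_le. intros k Hk. apply Rmult_le_compat_r; [lra|].
    assert (Hd1 : d1 dx W k = (P1 k + P0 k + P1 (k-1)%Z + P0 (k-1)%Z) / 4).
    { unfold d1, W, P1, P0, dxp. replace (k - 1 + 1)%Z with k by lia. field. lra. }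
    rewrite Hd1. unfold N, W, e.
    apply key with (q := q) (r := r);
      [lra|lra|apply HU1; lia|apply HU0; lia|apply HVb; lia|apply HVb; lia|apply Rmax_l|apply Rmax_r]. }
  eapply Rle_trans; [exact HB|].
  assert (HP1 : gsum (fun k => P1 (k-1)%Z ^ 2 * dx) K = gsum (fun k => P1 k ^ 2 * dx) K).
  { apply (shL K (fun k => P1 k ^ 2 * dx)). intros k. unfold P1, dxp.
    replace (k + Z.of_nat K + 1)%Z with (k + 1 + Z.of_nat K)%Z by lia. rewrite !He1. reflexivity. }
  assert (HP0 : gsum (fun k => P0 (k-1)%Z ^ 2 * dx) K = gsum (fun k => P0 k ^ 2 * dx) K).
  { apply (shL K (fun k => P0 k ^ 2 * dx)). intros k. unfold P0, dxp.
    replace (k + Z.of_nat K + 1)%Z with (k + 1 + Z.of_nat K)%Z by lia. rewrite !He0. reflexivity. }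
  assert (Htn : normsq K dx ta <= (c0 * (dt ^ 2 + dx ^ 2)) ^ 2).
  { apply sqrt_sq_le; [|apply (Htau m Hm)]. unfold normsq. apply gsum_nonneg. intros k.
    apply Rmult_le_pos; [apply pow2_ge_0|lra]. }
  assert (Hsplit : gsum (fun k => (ta k ^ 2 + C1 / 2 * (e (S m) k ^ 2 + e m k ^ 2)
          + C1 / 4 * (P1 k ^ 2 + P0 k ^ 2 + P1 (k-1)%Z ^ 2 + P0 (k-1)%Z ^ 2)) * dx) K
     = normsq K dx ta + C1 / 2 * (normsq K dx (e (S m)) + normsq K dx (e m))
       + C1 / 4 * (normsq K dx P1 + normsq K dx P0 + gsum (fun k => P1 (k-1)%Z ^ 2 * dx) K
                   + gsum (fun k => P0 (k-1)%Z ^ 2 * dx) K)).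
  { unfold normsq. rewrite <- !gsum_add, <- !gsum_scal, <- !gsum_add.
    apply gsum_ext; intros k. ring. }
  rewrite Hsplit, HP1, HP0. unfold H1sq. fold P1 P0.
  unfold normsq in *. 
  replace ((c0 * (dt ^ 2 + dx ^ 2)) ^ 2) with (c0 ^ 2 * (dt ^ 2 + dx ^ 2) ^ 2) in Htn by ring.
  lra.
Qed.
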